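(* Let $q$ be a prime power, $m$ a positive integer with $\gcd(m,q)=1$, $\lambda\in\mathbb{F}_q^*$, and $R_\lambda=\mathbb{F}_q[x]/\langle x^m-\lambda\rangle$. Let $C$ and $D$ be $\lambda$-quasi-twisted codes over $\mathbb{F}_q$ of length $2m$ and index $2$ (viewed as $R_\lambda$-submodules of $R_\lambda^2$), with $C$ generated by $(g_{11}(x),g_{12}(x))$ and $(0,g_{22}(x))$, and $D$ generated by $(f_{11}(x),f_{12}(x))$ and $(0,f_{22}(x))$, where $g_{11}(x)\mid x^m-\lambda$, $g_{22}(x)\mid x^m-\lambda$, $\deg g_{12}(x)<\deg g_{22}(x)$, $g_{11}(x)g_{22}(x)\mid (x^m-\lambda)g_{12}(x)$, and likewise $f_{11}(x)\mid x^m-\lambda$, $f_{22}(x)\mid x^m-\lambda$, $\deg f_{12}(x)<\deg f_{22}(x)$, $f_{11}(x)f_{22}(x)\mid (x^m-\lambda)f_{12}(x)$. Let $g(x)=\gcd(g_{11}(x),g_{22}(x))$, $f(x)=\gcd(f_{11}(x),f_{22}(x))$, and write $g_{22}(x)=g(x)g_{22}'(x)$, $f_{22}(x)=f(x)f_{22}'(x)$. Then $(C,D)$ is a linear complementary pair of codes if and only if: (I) $\gcd(f_{11}(x),g_{11}(x))=1$; (II) $g(x)=\dfrac{x^m-\lambda}{\mathrm{lcm}(f_{11}(x),f_{22}(x))}$; (III) $f(x)=\dfrac{x^m-\lambda}{\mathrm{lcm}(g_{11}(x),g_{22}(x))}$; (IV) $\gcd\big(g_{22}'(x),f_{22}'(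x),\,g_{11}(x)f_{12}(x)-g_{12}(x)f_{11}(x)\big)=1$.
   Context: A pair $(C,D)$ of $\mathbb{F}_q$-linear codes of the same length $n$ is a linear complementary pair (LCP) of codes if $C\cap D=\{0\}$ and $C+D=\mathbb{F}_q^n$. For $\lambda\in\mathbb{F}_q^*$, $T_\lambda(x_0,\dots,x_{n-1})=(\lambda x_{n-1},x_0,\dots,x_{n-2})$; a linear code $C\subseteq\mathbb{F}_q^{2m}$ is $\lambda$-quasi-twisted of index $2$ if $T_\lambda^2(C)\subseteq C$, and it is identified with an $R_\lambda$-submodule of $R_\lambda^2$ via $(c_{0,0},c_{0,1},\dots,c_{m-1,0},c_{m-1,1})\mapsto(c_0(x),c_1(x))$, $c_j(x)=\sum_i c_{i,j}x^i$. gcd and lcm are monic. *)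

(* Defs.v *)
From HB Require Import structures.
From mathcomp Require Import all_boot all_order all_algebra all_field.
Set Implicit Arguments. Unset Strict Implicit. Unset Printing Implicit Defensive.
Import GRing.Theory.
Local Open Scope ring_scope.

Section QT.
Variable F : fieldType.

Definition monicize (p : {poly F}) : {poly F} := (lead_coef p)^-1 *: p.
Definition mgcd (p q : {poly F}) : {poly F} := monicize (gcdp p q).
Definition mlcm (p q : {poly F}) : {poly F} := monicize ((p * q) %/ gcdp p q).

Definition xml (m : nat) (lam : F) : {poly F} := 'X^m - lam%:P.

(* the vector (c_{0,0}, c_{0,1}, ..., c_{m-1,0}, c_{m-1,1}) of F^{2m}
   associated with (c_0(x), c_1(x)) *)
Definition qt_vec (m : nat) (c0 c1 : {poly F}) : 'rV[F]_(2 * m) :=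
  \row_(i < 2 * m) (if odd i then c1 else c0)`_(i./2).

(* the lambda-quasi-twisted code of length 2m, index 2, generated as an
   R_lambda-submodule of R_lambda^2 by (a11, a12) and (0, a22) *)
Definition qt_code (m : nat) (lam : F) (a11 a12 a22 : {poly F})
  (v : 'rV[F]_(2 * m)) : Prop :=
  exists a b : {poly F},
    v = qt_vec m ((a * a11) %% xml m lam) ((a * a12 + b * a22) %% xml m lam).

Definition LCP (n : nat) (C D : 'rV[F]_n -> Prop) : Prop :=
  (forall v, C v -> D v -> v = 0) /\
  (forall v, exists c d, C c /\ D d /\ v = c + d).
End QT.
Arguments qt_code {F} m lam a11 a12 a22 v.
Arguments qt_vec {F} m c0 c1.

(* Main.v *)
Require Import Defs.
From HB Require Import structures.
From mathcomp Require Import all_boot all_order all_algebra all_field.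
From mathcomp Require Import ring lra.
From Stdlib Require Import Classical.
Import GRing.Theory.
Local Open Scope ring_scope.

Lemma m_neq0 (F : finFieldType) (m : nat) : coprime m #|F| -> (m%:R : F) != 0.
Proof.
move=> cop; have [p pr_p pch] := finPcharP F.
have hc := card_pprimeChar pch.
have gt1 := finNzRing_gt1 F.
have hF : #|F| = (p ^ logn p #|F|)%N by exact: hc.
have hpF : (p %| #|F|)%N.
  case E: (logn p #|F|) => [|k]; first by move: gt1; rewrite hF E.
  by rewrite hF E expnS dvdn_mulr.
rewrite -(dvdn_pcharf pch); apply/negP => hpm.
have : (p %| gcdn m #|F|)%N by rewrite dvdn_gcd hpm hpF.
by rewrite (eqP cop) dvdn1 => /eqP h; rewrite h in pr_p.
Qed.
Lemma xml_bez (F : fieldType) (k : nat) (lam : F) :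
  (k.+1%:R : F) != 0 -> lam != 0 ->
  - (lam^-1)%:P * ('X^(k.+1) - lam%:P) + ((k.+1%:R * lam)^-1)%:P * 'X * ('X^k *+ k.+1) = 1 :> {poly F}.
Proof.
move=> mn0 l0.
rewrite exprS.
set A := lam%:P; set B := lam^-1%:P; set C := ((k.+1%:R * lam)^-1)%:P.
pose D : {poly F} := (k.+1%:R)%:P.
have -> : ('X^k *+ k.+1 : {poly F}) = D * 'X^k by rewrite /D polyC_natr mulr_natl.
have CD : C * D = B.
  rewrite -polyCM; congr polyC; field; rewrite l0 /= addrC natr1.
  done.
have BA : B * A = 1 by rewrite -polyCM mulVf.
apply: (@etrans _ _ (-(B*('X * 'X^k)) + B*A + (C*D)*('X * 'X^k))); first by ring.
rewrite CD BA; ring.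
Qed.

Lemma xml_sep (F : fieldType) (m : nat) (lam : F) :
  (0 < m)%N -> (m%:R : F) != 0 -> lam != 0 -> separable_poly (xml m lam).
Proof.
move=> m0 mn0 l0; rewrite unlock /xml.
apply/Bezout_eq1_coprimepP.
exists (- (lam^-1)%:P, ((m%:R * lam)^-1)%:P * 'X) => /=.
rewrite derivB derivC subr0 derivXn.
case: m m0 mn0 => [//|k] _ mn0 /=.
exact: xml_bez.
Qed.
Section Irr.
Variable F : fieldType.
Implicit Types p q a b e : {poly F}.

Lemma irr_gt1 p : irreducible_poly p -> (1 < size p)%N.
Proof. by case. Qed.

Lemma irr_exists e : (1 < size e)%N -> exists p, irreducible_poly p /\ p %| e.
Proof.
move: {2}(size e) (leqnn (size e)) => n; elim: n e => [|n IH] e.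
  by rewrite leqn0 => /eqP ->.
move=> hs h1.
have [irr|nirr] := (classic (forall q, size q != 1%N -> q %| e -> q %= e)).
  by exists e; split => //; split.
have [q [hq1 hqe nqe]] : exists q, [/\ size q != 1%N, q %| e & ~~ (q %= e)].
  apply: NNPP => hn; apply: nirr => q hq hqe; apply/negPn/negP => hne.
  by apply: hn; exists q.
have e0 : e != 0 by rewrite -size_poly_gt0; apply: ltn_trans h1.
have q0 : q != 0 by apply: contraTneq hqe => ->; rewrite dvd0p.
have hq1' : (1 < size q)%N.
  by rewrite ltn_neqAle eq_sym hq1 /= size_poly_gt0.
have hlt : (size q < size e)%N.
  by rewrite ltn_neqAle dvdp_leq // andbT dvdp_size_eqp.
have [p [ip hp]] := IH q (leq_trans hlt hs) hq1'.
by exists p; split => //; apply: dvdp_trans hqe.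
Qed.

Lemma irr_dvd_mul p a b : irreducible_poly p -> p %| a * b -> p %| a \/ p %| b.
Proof.
move=> ip hab; case: (boolP (p %| a)) => ha; first by left.
right; suff cop : coprimep p a by rewrite -(Gauss_dvdpr _ cop).
apply/coprimepP => d hdp hda.
case: (irredp_XsubCP ip hdp) => // hdp'.
by move: ha; rewrite -(eqp_dvdl _ hdp') hda.
Qed.

Lemma irr_ndvd1 p : irreducible_poly p -> ~~ (p %| 1).
Proof.
move=> ip; apply/negP => h.
have := dvdp_leq (oner_neq0 _) h; rewrite size_poly1.
by move: (irr_gt1 _ ip); case: (size p) => [|[|]].
Qed.

Variable N : {poly F}.
Hypothesis N0 : N != 0.
Hypothesis SF : forall u v, u * v %| N -> coprimep u v.

Lemma irr_sq p : irreducible_poly p -> ~~ (p * p %| N).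
Proof.
move=> ip; apply/negP => h; have := SF _ _ h.
move/coprimepP => /(_ p (dvdpp _) (dvdpp _)) /eqp_size; rewrite size_poly1.
by move: (irr_gt1 _ ip) => /[swap] ->.
Qed.

Lemma LP M y : M %| N -> (forall p, irreducible_poly p -> p %| M -> p %| y) -> M %| y.
Proof.
move=> hM hp.
have M0 : M != 0 by apply: contraTneq hM => ->; rewrite dvd0p.
set d := gcdp M y; set e := M %/ d.
have hdM : d %| M by rewrite dvdp_gcdl.
have eM : e * d = M by rewrite divpK.
have e0 : e != 0 by apply: contraNneq M0 => e0; rewrite -eM e0 mul0r.
case: (ltnP 1 (size e)) => hs.
  have [p [ip hpe]] := irr_exists _ hs.
  have hpM : p %| M by rewrite -eM dvdp_mulr.
  have hpd : p %| d by rewrite dvdp_gcd hpM hp.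
  have : p * p %| N by apply: dvdp_trans hM; rewrite -eM dvdp_mul.
  by rewrite (negPf (irr_sq _ ip)).
have e1 : e %= 1.
  by rewrite -size_poly_eq1 eqn_leq hs /= size_poly_gt0.
have : M %= d by rewrite -eM -{2}(mul1r d) eqp_mulr.
by move/eqp_dvdl => ->; rewrite dvdp_gcdr.
Qed.

Lemma unitLP h : h %| N -> (forall p, irreducible_poly p -> p %| h -> False) -> h %= 1.
Proof.
move=> hN hp.
have : h %| 1 by apply: LP => // p ip hph; case: (hp p ip hph).
by move=> h1; rewrite /eqp h1 dvd1p.
Qed.

End Irr.
Section Mon.
Variable F : fieldType.
Implicit Types h x y : {poly F}.

Lemma monicize_eqp h : monicize h %= h.
Proof.
rewrite /monicize; case: (eqVneq h 0) => [->|h0]; first by rewrite scaler0 eqpxx.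
by rewrite eqp_scale // invr_eq0 lead_coef_eq0.
Qed.

Lemma monicize_monic h : h != 0 -> monicize h \is monic.
Proof.
move=> h0; rewrite /monicize monicE lead_coefZ mulVf //.
by rewrite lead_coef_eq0.
Qed.

Lemma monicize_eq1 h : (monicize h = 1) <-> (h %= 1).
Proof.
split.
  by move=> e; rewrite -(eqp_ltrans (monicize_eqp h)) e eqpxx.
move=> h1; have h0 : h != 0 by apply: contraTneq h1 => ->; rewrite eqp01.
apply/eqP; rewrite -eqp_monic ?monicize_monic ?monic1 //.
by rewrite (eqp_ltrans (monicize_eqp h)).
Qed.

Lemma mgcd_eq1 x y : (mgcd x y = 1) <-> coprimep x y.
Proof. by rewrite /mgcd monicize_eq1 /coprimep size_poly_eq1. Qed.

End Mon.

Section Vec.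
Variable F : fieldType.

Lemma qt_vecD m a b c d :
  qt_vec m (a + b) (c + d) = qt_vec m a c + qt_vec m b d :> 'rV[F]_(2 * m).
Proof. by apply/rowP => i; rewrite !mxE; case: odd; rewrite coefD. Qed.

Lemma qt_vec0 m : qt_vec m 0 0 = 0 :> 'rV[F]_(2 * m).
Proof. by apply/rowP => i; rewrite !mxE; case: odd; rewrite coef0. Qed.

Lemma qt_vec_inj m (c0 c1 d0 d1 : {poly F}) :
  (size c0 <= m)%N -> (size c1 <= m)%N -> (size d0 <= m)%N -> (size d1 <= m)%N ->
  qt_vec m c0 c1 = qt_vec m d0 d1 -> c0 = d0 /\ c1 = d1.
Proof.
move=> s0 s1 s2 s3 e.
have key : forall i, (i < m)%N -> c0`_i = d0`_i /\ c1`_i = d1`_i.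
  move=> i im.
  have h0 : (i.*2 < 2 * m)%N by rewrite mul2n ltn_double.
  have h1 : (i.*2.+1 < 2 * m)%N by rewrite mul2n ltn_Sdouble.
  have := congr1 (fun v : 'rV[F]_(2 * m) => v 0 (Ordinal h0)) e.
  have := congr1 (fun v : 'rV[F]_(2 * m) => v 0 (Ordinal h1)) e.
  rewrite !mxE /= odd_double /= uphalf_double doubleK.
  by move=> -> ->.
split; apply/polyP => i; case: (ltnP i m) => im; try by case: (key i im).
  by rewrite !nth_default // (leq_trans _ im).
by rewrite !nth_default // (leq_trans _ im).
Qed.

Lemma qt_vec_surj m (w : 'rV[F]_(2 * m)) :
  exists c0 c1 : {poly F}, [/\ (size c0 <= m)%N, (size c1 <= m)%N & w = qt_vec m c0 c1].
Proof.
pose f k := nth 0 [seq w 0 j | j <- enum 'I_(2 * m)] k.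
have hf : forall j : 'I_(2 * m), f j = w 0 j.
  move=> j; rewrite /f (nth_map j) ?size_enum_ord ?ltn_ord //.
  by rewrite nth_ord_enum.
exists (\poly_(i < m) f i.*2), (\poly_(i < m) f i.*2.+1).
split; try exact: size_poly.
apply/rowP => j; rewrite !mxE.
have hj : (j./2 < m)%N.
  by rewrite -divn2 ltn_divLR // -[(m * 2)%N]mulnC ltn_ord.
case: (boolP (odd j)) => oj; rewrite coef_poly hj -hf; congr f.
  by rewrite -[in LHS](odd_double_half j) oj add1n.
by rewrite -[in LHS](odd_double_half j) (negPf oj) add0n.
Qed.
End Vec.


Definition inCode (F : fieldType) (N a11 a12 a22 u v : {poly F}) : Prop :=
  exists a b, N %| u - a * a11 /\ N %| v - (a * a12 + b * a22).

Arguments inCode {F}.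

Section Bridge.
Variable F : fieldType.
Variable m : nat.
Variable lam : F.
Hypothesis m0 : (0 < m)%N.
Local Notation N := (xml m lam).

Lemma sizeN : size N = m.+1.
Proof. by rewrite /xml size_XnsubC. Qed.

Lemma N0 : N != 0.
Proof. by rewrite -size_poly_gt0 sizeN. Qed.

Lemma size_mod (x : {poly F}) : (size (x %% N)%R <= m)%N.
Proof. by rewrite -ltnS -sizeN ltn_modp N0. Qed.

Lemma modp_eqD [x y : {poly F}] : N %| x - y -> x %% N = y %% N.
Proof.
move=> h; rewrite -[x](subrK y) modpD.
by move: h; rewrite /dvdp => /eqP ->; rewrite add0r.
Qed.

Lemma modp_eqDr [x y : {poly F}] : x %% N = y %% N -> N %| x - y.
Proof. by move=> h; rewrite /dvdp modpD modpN h subrr. Qed.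

Lemma code_iff (a11 a12 a22 : {poly F}) w :
  qt_code m lam a11 a12 a22 w <->
  exists c0 c1, w = qt_vec m (c0 %% N) (c1 %% N) /\ inCode N a11 a12 a22 c0 c1.
Proof.
split.
  move=> [a [b ->]]; exists (a * a11), (a * a12 + b * a22); split => //.
  by exists a, b; rewrite !subrr dvdp0.
move=> [c0 [c1 [-> [a [b [h1 h2]]]]]].
by exists a, b; rewrite (modp_eqD h1) (modp_eqD h2).
Qed.

Lemma inCode_cong [a11 a12 a22 u v u' v' : {poly F}] :
  inCode N a11 a12 a22 u v -> N %| u - u' -> N %| v - v' -> inCode N a11 a12 a22 u' v'.
Proof.
move=> [a [b [h1 h2]]] e1 e2; exists a, b; split.
  have -> : u' - a * a11 = (u - a * a11) - (u - u') by ring.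
  exact: dvdp_sub.
have -> : v' - (a * a12 + b * a22) = (v - (a * a12 + b * a22)) - (v - v') by ring.
exact: dvdp_sub.
Qed.

Variables g11 g12 g22 f11 f12 f22 : {poly F}.

Definition P1 := forall u v, inCode N g11 g12 g22 u v -> inCode N f11 f12 f22 u v ->
  N %| u /\ N %| v.
Definition P2 := forall u v, exists u1 v1 u2 v2,
  [/\ inCode N g11 g12 g22 u1 v1, inCode N f11 f12 f22 u2 v2,
      N %| u - (u1 + u2) & N %| v - (v1 + v2)].

Lemma LCP_iff : LCP (qt_code m lam g11 g12 g22) (qt_code m lam f11 f12 f22) <-> P1 /\ P2.
Proof.
split.
  move=> [L1 L2]; split.
    move=> u v hC hD.
    have hw := L1 (qt_vec m (u %% N) (v %% N)).
    have := hw (proj2 (code_iff _ _ _ _) (ex_intro _ u (ex_intro _ v (conj erefl hC))))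
               (proj2 (code_iff _ _ _ _) (ex_intro _ u (ex_intro _ v (conj erefl hD)))).
    rewrite -(qt_vec0 F m) => /qt_vec_inj [] //; rewrite ?size_mod ?size_poly0 //.
    by rewrite /dvdp => -> ->.
  move=> u v; have [c [d [hc [hd e]]]] := L2 (qt_vec m (u %% N) (v %% N)).
  move/code_iff: hc => [c0 [c1 [ec hc]]]; move/code_iff: hd => [d0 [d1 [ed hd]]].
  exists c0, c1, d0, d1; split => //.
    move: e; rewrite ec ed -qt_vecD => /qt_vec_inj [] //; rewrite ?size_mod //;
      try by apply: (leq_trans (size_polyD _ _)); rewrite geq_max !size_mod.
    by move=> e1 _; apply: modp_eqDr; rewrite e1 modpD.
  move: e; rewrite ec ed -qt_vecD => /qt_vec_inj [] //; rewrite ?size_mod //;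
    try by apply: (leq_trans (size_polyD _ _)); rewrite geq_max !size_mod.
  by move=> _ e1; apply: modp_eqDr; rewrite e1 modpD.
move=> [H1 H2]; split.
  move=> w /code_iff [c0 [c1 [ec hc]]] /code_iff [d0 [d1 [ed hd]]].
  have := ec; rewrite ed => /qt_vec_inj [] //; rewrite ?size_mod // => e0 e1.
  have hd' : inCode N f11 f12 f22 c0 c1.
    by apply: (inCode_cong hd); apply: modp_eqDr.
  have [n0 n1] := H1 _ _ hc hd'.
  by move: n0 n1; rewrite e0 e1 /dvdp => /eqP -> /eqP ->; rewrite qt_vec0.
move=> w; have [w0 [w1 [s0 s1 ->]]] := qt_vec_surj _ _ w.
have [u1 [v1 [u2 [v2 [hc hd e0 e1]]]]] := H2 w0 w1.
exists (qt_vec m (u1 %% N) (v1 %% N)), (qt_vec m (u2 %% N) (v2 %% N)); split; [|split].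
- by apply: (proj2 (code_iff _ _ _ _)); exists u1, v1.
- by apply: (proj2 (code_iff _ _ _ _)); exists u2, v2.
rewrite -qt_vecD -!modpD.
have sm : forall x : {poly F}, (size x <= m)%N -> x %% N = x.
  by move=> x hx; rewrite modp_small // sizeN ltnS.
by rewrite -(modp_eqD e0) -(modp_eqD e1) !sm.
Qed.

End Bridge.


Arguments irr_dvd_mul {F p a b}.
Arguments irr_sq {F N} SF {p}.
Arguments LP {F N} N0 SF {M y}.
Arguments unitLP {F N} N0 SF {h}.
Arguments irr_ndvd1 {F p}.
Arguments irr_gt1 {F p}.
Arguments mgcd_eq1 {F x y}.
Arguments monicize_eqp {F}.
Arguments monicize_monic {F h}.
Arguments monicize_eq1 {F h}.

Lemma irr_coprime (F : fieldType) (p a : {poly F}) :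
  irreducible_poly p -> ~~ (p %| a) -> coprimep p a.
Proof.
move=> ip ha; apply/coprimepP => d hdp hda.
case: (irredp_XsubCP ip hdp) => // hdp'.
by move: ha; rewrite -(eqp_dvdl _ hdp') hda.
Qed.

Lemma irr_neq0 (F : fieldType) (p : {poly F}) : irreducible_poly p -> p != 0.
Proof. by move=> /irr_gt1 h; rewrite -size_poly_gt0 (ltn_trans _ h). Qed.

Arguments irr_coprime {F p a}.
Arguments irr_neq0 {F p}.

Section Gen.
Variable F : fieldType.
Variables (N x11 x12 x22 : {poly F}).
Hypothesis N0 : N != 0.
Hypothesis SF : forall u v, u * v %| N -> coprimep u v.
Hypotheses (hx11 : x11 %| N) (hx22 : x22 %| N) (hxc : x11 * x22 %| N * x12).

Variable p : {poly F}.
Hypothesis ip : irreducible_poly p.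
Hypothesis hpN : p %| N.

Let M := N %/ p.
Let eM : M * p = N. Proof. exact: divpK. Qed.
Let p0 : p != 0. Proof. exact: irr_neq0. Qed.

Lemma F1 : p %| x11 -> p %| x22 -> p %| x12.
Proof.
move=> h11 h22; apply/negP => n12.
have h : p * p %| M * x12 * p.
  apply: (dvdp_trans (dvdp_mul h11 h22)); apply: (dvdp_trans hxc).
  by rewrite -eM mulrAC dvdpp.
rewrite dvdp_mul2r // in h.
case: (irr_dvd_mul ip h) => hh; last by rewrite hh in n12.
have : p * p %| N by rewrite -eM dvdp_mul2r.
by rewrite (negPf (irr_sq SF ip)).
Qed.

Lemma modN z : N %| z -> p %| z.
Proof. by move=> h; apply: dvdp_trans h. Qed.

Lemma inX_u u v : inCode N x11 x12 x22 u v -> p %| x11 -> p %| u.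
Proof.
move=> [a [b [h1 _]]] h11.
have -> : u = (u - a * x11) + a * x11 by ring.
apply: dvdp_add; [exact: modN | exact: dvdp_mull].
Qed.

Lemma inX_zero u v : inCode N x11 x12 x22 u v -> p %| x11 -> p %| x22 -> p %| u /\ p %| v.
Proof.
move=> hc h11 h22; split; first exact: (inX_u _ _ hc h11).
case: hc => [a [b [_ h2]]].
have -> : v = (v - (a * x12 + b * x22)) + (a * x12 + b * x22) by ring.
apply: dvdp_add; first exact: modN.
apply: dvdp_add; apply: dvdp_mull => //; exact: F1.
Qed.

Lemma inX_v u v : inCode N x11 x12 x22 u v -> p %| u -> ~~ (p %| x11) -> p %| x22 -> p %| v.
Proof.
move=> [a [b [h1 h2]]] hu n11 h22.
have ha : p %| a * x11.
  have -> : a * x11 = u - (u - a * x11) by ring.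
  by apply: dvdp_sub => //; exact: modN.
have {}ha : p %| a by case: (irr_dvd_mul ip ha) => // h; rewrite h in n11.
have -> : v = (v - (a * x12 + b * x22)) + (a * x12 + b * x22) by ring.
apply: dvdp_add; first exact: modN.
by apply: dvdp_add; [exact: dvdp_mulr | exact: dvdp_mull].
Qed.

Lemma Xmem : ~~ (p %| x11) -> ~~ (p %| x22) ->
  forall x y, inCode N x11 x12 x22 (M * x) (M * y).
Proof.
move=> n11 n22 x y.
have /Bezout_eq1_coprimepP [[r1 s1] /= e1] := irr_coprime ip n11.
have /Bezout_eq1_coprimepP [[r2 s2] /= e2] := irr_coprime ip n22.
exists (M * x * s1), (M * (y - x * s1 * x12) * s2); split.
  have -> : M * x - M * x * s1 * x11 = M * x * (1 - s1 * x11) by ring.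
  have -> : 1 - s1 * x11 = r1 * p by rewrite -e1; ring.
  have -> : M * x * (r1 * p) = (M * p) * (x * r1) by ring.
  by rewrite eM dvdp_mulr.
have -> : M * y - (M * x * s1 * x12 + M * (y - x * s1 * x12) * s2 * x22)
   = M * (y - x * s1 * x12) * (1 - s2 * x22) by ring.
have -> : 1 - s2 * x22 = r2 * p by rewrite -e2; ring.
have -> : M * (y - x * s1 * x12) * (r2 * p) = (M * p) * ((y - x * s1 * x12) * r2) by ring.
by rewrite eM dvdp_mulr.
Qed.

End Gen.


Arguments irr_dvd_mul {F p a b}.
Arguments irr_sq {F N} SF {p}.
Arguments LP {F N} N0 SF {M y}.
Arguments unitLP {F N} N0 SF {h}.
Arguments irr_ndvd1 {F p}.
Arguments irr_gt1 {F p}.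
Arguments irr_coprime {F p a}.
Arguments irr_neq0 {F p}.

Arguments F1 {F N x11 x12 x22} SF hxc {p} ip hpN.
Arguments modN {F N p} hpN {z}.
Arguments inX_u {F N x11 x12 x22 p} hpN {u v}.
Arguments inX_zero {F N x11 x12 x22} SF hxc {p} ip hpN {u v}.
Arguments inX_v {F N x11 x12 x22 p} ip hpN {u v}.
Arguments Xmem {F N x11 x12 x22 p} ip hpN.

Definition P1g (F : fieldType) (N g11 g12 g22 f11 f12 f22 : {poly F}) :=
  forall u v, inCode N g11 g12 g22 u v -> inCode N f11 f12 f22 u v -> N %| u /\ N %| v.
Definition P2g (F : fieldType) (N g11 g12 g22 f11 f12 f22 : {poly F}) :=
  forall u v, exists u1 v1 u2 v2,
  [/\ inCode N g11 g12 g22 u1 v1, inCode N f11 f12 f22 u2 v2,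
      N %| u - (u1 + u2) & N %| v - (v1 + v2)].

Arguments P1g {F}.
Arguments P2g {F}.

Lemma P1g_sym (F : fieldType) (N g11 g12 g22 f11 f12 f22 : {poly F}) :
  P1g N g11 g12 g22 f11 f12 f22 -> P1g N f11 f12 f22 g11 g12 g22.
Proof. by move=> H u v hc hd; apply: H. Qed.

Lemma P2g_sym (F : fieldType) (N g11 g12 g22 f11 f12 f22 : {poly F}) :
  P2g N g11 g12 g22 f11 f12 f22 -> P2g N f11 f12 f22 g11 g12 g22.
Proof.
move=> H u v; have [u1 [v1 [u2 [v2 [h1 h2 h3 h4]]]]] := H u v.
by exists u2, v2, u1, v1; split => //; [rewrite (addrC u2) | rewrite (addrC v2)].
Qed.

Lemma dvdz (F : fieldType) (N x : {poly F}) : x = 0 -> N %| x.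
Proof. by move=> ->; rewrite dvdp0. Qed.

Lemma dv2 (F : fieldType) (p A B : {poly F}) : p %| A -> p %| B -> p %| A + B.
Proof. exact: dvdp_add. Qed.
Lemma dv3 (F : fieldType) (p A B C : {poly F}) : p %| A -> p %| B -> p %| C -> p %| A + B + C.
Proof. by move=> *; rewrite !dvdp_add. Qed.
Lemma dv4 (F : fieldType) (p A B C D : {poly F}) :
  p %| A -> p %| B -> p %| C -> p %| D -> p %| A + B + C + D.
Proof. by move=> *; rewrite !dvdp_add. Qed.

Section FromLCP.
Variable F : fieldType.
Variables (N g11 g12 g22 f11 f12 f22 : {poly F}).
Hypothesis N0 : N != 0.
Hypothesis SF : forall u v, u * v %| N -> coprimep u v.
Hypotheses (hg11 : g11 %| N) (hg22 : g22 %| N) (hgc : g11 * g22 %| N * g12).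
Hypotheses (hf11 : f11 %| N) (hf22 : f22 %| N) (hfc : f11 * f22 %| N * f12).
Hypothesis H1 : P1g N g11 g12 g22 f11 f12 f22.
Hypothesis H2 : P2g N g11 g12 g22 f11 f12 f22.
Variable p : {poly F}.
Hypothesis ip : irreducible_poly p.
Hypothesis hpN : p %| N.

Let M := N %/ p.
Let eM : M * p = N. Proof. exact: divpK. Qed.
Let M0 : M != 0. Proof. by apply: contraNneq N0 => h; rewrite -eM h mul0r. Qed.
Let NM x : (N %| M * x) = (p %| x).
Proof. by rewrite -eM dvdp_mul2l. Qed.

Lemma loc1 : ~~ ((p %| g11) && (p %| f11)).
Proof.
apply/negP => /andP [a c].
have [u1 [v1 [u2 [v2 [hc hd e0 _]]]]] := H2 1 0.
have h1 := inX_u hpN hc a; have h2 := inX_u hpN hd c.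
have : p %| 1.
  have -> : (1 : {poly F}) = (1 - (u1 + u2)) + u1 + u2 by ring.
  by apply: dv3 => //; apply: (modN hpN).
by rewrite (negPf (irr_ndvd1 ip)).
Qed.

Lemma loc2a : p %| g11 -> p %| g22 -> ~~ (p %| f22).
Proof.
move=> a b; apply/negP => d.
have [u1 [v1 [u2 [v2 [hc [a1 [b1 [hd1 hd2]]] e0 e1]]]]] := H2 1 0.
have [hu1 hv1] := inX_zero SF hgc ip hpN hc a b.
have k1 : p %| 1 - a1 * f11.
  have -> : 1 - a1 * f11 = (1 - (u1 + u2)) + u1 + (u2 - a1 * f11) by ring.
  by apply: dv3 => //; apply: (modN hpN).
have [u1' [v1' [u2' [v2' [hc' [a1' [b1' [hd1' hd2']]] e0' e1']]]]] := H2 0 1.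
have [hu1' hv1'] := inX_zero SF hgc ip hpN hc' a b.
have k2 : p %| a1' * f11.
  have -> : a1' * f11 = - (0 - (u1' + u2')) + - u1' + - (u2' - a1' * f11) by ring.
  by apply: dv3; rewrite dvdpNr //; apply: (modN hpN).
have k3 : p %| 1 - a1' * f12.
  have -> : 1 - a1' * f12 = (1 - (v1' + v2')) + v1' + (v2' - (a1' * f12 + b1' * f22)) + b1' * f22 by ring.
  by apply: dv4 => //; [apply: (modN hpN) | apply: (modN hpN) | apply: dvdp_mull].
have : p %| 1.
  have -> : (1 : {poly F}) = (1 - a1' * f12) + a1' * f12 * (1 - a1 * f11) + (a1' * f11) * (a1 * f12) by ring.
  by apply: dv3 => //; [exact: dvdp_mull | exact: dvdp_mulr].
by rewrite (negPf (irr_ndvd1 ip)).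
Qed.

Lemma loc2b : ~~ (p %| f11) -> ~~ (p %| f22) -> (p %| g11) && (p %| g22).
Proof.
move=> nc nd.
have X := Xmem (x12:=f12) ip hpN nc nd.
have hC1 : inCode N g11 g12 g22 (M * g11) (M * g12).
  by exists M, 0; split; apply: dvdz; ring.
have hC2 : inCode N g11 g12 g22 (M * 0) (M * g22).
  by exists 0, M; split; apply: dvdz; ring.
have [r1 _] := H1 _ _ hC1 (X _ _).
have [_ r2] := H1 _ _ hC2 (X _ _).
by rewrite -!NM r1 r2.
Qed.

Lemma loc2 : ((p %| g11) && (p %| g22)) = (~~ (p %| f11) && ~~ (p %| f22)).
Proof.
case: (boolP ((p %| g11) && (p %| g22))) => [/andP [a b]|nab].
  have nc : ~~ (p %| f11) by move: loc1; rewrite a.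
  by rewrite nc loc2a.
apply/esym/negP => /andP [nc nd].
by move: nab; rewrite loc2b.
Qed.

Lemma loc4 : p %| g11 * f12 - g12 * f11 -> (p %| g11) || (p %| f11).
Proof.
move=> hdet.
have hC : inCode N g11 g12 g22 (M * (g11 * f11)) (M * (g12 * f11)).
  exists (M * f11), 0; split.
    by have -> : M * (g11 * f11) - M * f11 * g11 = 0 by ring.
  by have -> : M * (g12 * f11) - (M * f11 * g12 + 0 * g22) = 0 by ring.
have hD : inCode N f11 f12 f22 (M * (g11 * f11)) (M * (g12 * f11)).
  exists (M * g11), 0; split.
    by have -> : M * (g11 * f11) - M * g11 * f11 = 0 by ring.
  have -> : M * (g12 * f11) - (M * g11 * f12 + 0 * f22) = - (M * (g11 * f12 - g12 * f11)) by ring.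
  by rewrite dvdpNr NM.
have [r _] := H1 _ _ hC hD.
rewrite NM in r.
by case: (irr_dvd_mul ip r) => ->; rewrite ?orbT.
Qed.

End FromLCP.


Arguments irr_dvd_mul {F p a b}.
Arguments irr_sq {F N} SF {p}.
Arguments LP {F N} N0 SF {M y}.
Arguments unitLP {F N} N0 SF {h}.
Arguments irr_ndvd1 {F p}.
Arguments irr_gt1 {F p}.
Arguments irr_coprime {F p a}.
Arguments irr_neq0 {F p}.
Arguments F1 {F N x11 x12 x22} SF hxc {p} ip hpN.
Arguments modN {F N p} hpN {z}.
Arguments inX_u {F N x11 x12 x22 p} hpN {u v}.
Arguments inX_zero {F N x11 x12 x22} SF hxc {p} ip hpN {u v}.
Arguments inX_v {F N x11 x12 x22 p} ip hpN {u v}.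
Arguments Xmem {F N x11 x12 x22 p} ip hpN.

Definition Loc (F : fieldType) (g11 g12 g22 f11 f12 f22 p : {poly F}) : Prop :=
 [/\ ~~ ((p %| g11) && (p %| f11)),
     ((p %| g11) && (p %| g22)) = (~~ (p %| f11) && ~~ (p %| f22)),
     ((p %| f11) && (p %| f22)) = (~~ (p %| g11) && ~~ (p %| g22)) &
     ((p %| g22) && (p %| f22) && ~~ (p %| g11) && ~~ (p %| f11)) ==>
        ~~ (p %| g11 * f12 - g12 * f11)].

Arguments Loc {F}.
Arguments loc1 {F N g11 g12 g22 f11 f12 f22} H2 {p} ip hpN.
Arguments loc2 {F N g11 g12 g22 f11 f12 f22} N0 SF hgc H1 H2 {p} ip hpN.
Arguments loc4 {F N g11 g12 g22 f11 f12 f22} N0 H1 {p} ip hpN.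
Arguments P1g_sym {F N g11 g12 g22 f11 f12 f22}.
Arguments P2g_sym {F N g11 g12 g22 f11 f12 f22}.

Section ToLCP.
Variable F : fieldType.
Variables (N g11 g12 g22 f11 f12 f22 : {poly F}).
Hypothesis N0 : N != 0.
Hypothesis SF : forall u v, u * v %| N -> coprimep u v.
Hypotheses (hg11 : g11 %| N) (hg22 : g22 %| N) (hgc : g11 * g22 %| N * g12).
Hypotheses (hf11 : f11 %| N) (hf22 : f22 %| N) (hfc : f11 * f22 %| N * f12).

Lemma Loc_of_P : P1g N g11 g12 g22 f11 f12 f22 -> P2g N g11 g12 g22 f11 f12 f22 ->
  forall p, irreducible_poly p -> p %| N -> Loc g11 g12 g22 f11 f12 f22 p.
Proof.
move=> H1 H2 p ip hpN; split.
- exact: (loc1 H2 ip hpN).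
- exact: (loc2 N0 SF hgc H1 H2 ip hpN).
- exact: (loc2 N0 SF hfc (P1g_sym H1) (P2g_sym H2) ip hpN).
apply/implyP => /andP [/andP [/andP [b d] na] nc].
apply/negP => hdet.
by move: (loc4 N0 H1 ip hpN hdet); rewrite (negPf na) (negPf nc).
Qed.

Hypothesis HL : forall p, irreducible_poly p -> p %| N -> Loc g11 g12 g22 f11 f12 f22 p.

Lemma loc_zero [p u v : {poly F}] : irreducible_poly p -> p %| N ->
  inCode N g11 g12 g22 u v -> inCode N f11 f12 f22 u v -> p %| u /\ p %| v.
Proof.
move=> ip hpN hc hd.
have [l1 l2 l3 l4] := HL _ ip hpN.
case: (boolP (p %| g11)) => a.
  case: (boolP (p %| g22)) => b.
    exact: (inX_zero SF hgc ip hpN hc).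
  have nc : ~~ (p %| f11) by move: l1; rewrite a.
  have d : p %| f22 by move: l2; rewrite a (negPf b) nc /= => /esym /negbFE.
  have hu := inX_u hpN hc a.
  by split => //; exact: (inX_v ip hpN hd hu nc d).
case: (boolP (p %| f11)) => c.
  case: (boolP (p %| f22)) => d.
    exact: (inX_zero SF hfc ip hpN hd).
  have b : p %| g22 by move: l3; rewrite c (negPf d) a /= => /esym /negbFE.
  have hu := inX_u hpN hd c.
  by split => //; exact: (inX_v ip hpN hc hu a b).
have d : p %| f22 by move: l2; rewrite (negPf a) c /= => /esym /negbFE.
have b : p %| g22 by move: l3; rewrite (negPf c) a /= => /esym /negbFE.
have nd : ~~ (p %| g11 * f12 - g12 * f11) by move: l4; rewrite b d a c.
case: hc => [a0 [b0 [hc1 hc2]]]; case: hd => [a1 [b1 [hd1 hd2]]].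
have k1 : p %| a0 * g11 - a1 * f11.
  have -> : a0 * g11 - a1 * f11 = (u - a1 * f11) - (u - a0 * g11) by ring.
  by apply: dvdp_sub; apply: (modN hpN).
have k2 : p %| a0 * g12 - a1 * f12.
  have -> : a0 * g12 - a1 * f12 = (v - (a1 * f12 + b1 * f22)) + b1 * f22
      + - (v - (a0 * g12 + b0 * g22)) + - (b0 * g22) by ring.
  by apply: dv4; rewrite ?dvdpNr; [apply: (modN hpN) | apply: dvdp_mull | apply: (modN hpN) | apply: dvdp_mull].
have k3 : p %| a0 * (g11 * f12 - g12 * f11).
  have -> : a0 * (g11 * f12 - g12 * f11) = f12 * (a0 * g11 - a1 * f11) + - (f11 * (a0 * g12 - a1 * f12)) by ring.
  by apply: dv2; rewrite ?dvdpNr; apply: dvdp_mull.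
have ha0 : p %| a0 by case: (irr_dvd_mul ip k3) => // h; rewrite h in nd.
split.
  have -> : u = (u - a0 * g11) + a0 * g11 by ring.
  by apply: dv2; [apply: (modN hpN) | apply: dvdp_mulr].
have -> : v = (v - (a0 * g12 + b0 * g22)) + a0 * g12 + b0 * g22 by ring.
by apply: dv3; [apply: (modN hpN) | apply: dvdp_mulr | apply: dvdp_mull].
Qed.

Lemma P1_of_Loc : P1g N g11 g12 g22 f11 f12 f22.
Proof.
move=> u v hc hd; split; apply: (LP N0 SF (dvdpp N)) => p ip hpN.
  by case: (loc_zero ip hpN hc hd).
by case: (loc_zero ip hpN hc hd).
Qed.

End ToLCP.


Arguments irr_dvd_mul {F p a b}.
Arguments irr_sq {F N} SF {p}.
Arguments LP {F N} N0 SF {M y}.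
Arguments unitLP {F N} N0 SF {h}.
Arguments irr_ndvd1 {F p}.
Arguments irr_gt1 {F p}.
Arguments irr_coprime {F p a}.
Arguments irr_neq0 {F p}.
Arguments Loc {F}.

Section P2L.
Variable F : fieldType.
Variables (N g11 g12 g22 f11 f12 f22 : {poly F}).
Hypothesis N0 : N != 0.
Hypothesis SF : forall u v, u * v %| N -> coprimep u v.
Hypotheses (hg11 : g11 %| N) (hg22 : g22 %| N).
Hypotheses (hf11 : f11 %| N) (hf22 : f22 %| N).
Hypothesis HL : forall p, irreducible_poly p -> p %| N -> Loc g11 g12 g22 f11 f12 f22 p.

Lemma P2_of_Loc : P2g N g11 g12 g22 f11 f12 f22.
Proof.
have c1 : coprimep g11 f11.
  rewrite /coprimep size_poly_eq1; apply: (unitLP N0 SF).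
    exact: dvdp_trans (dvdp_gcdl _ _) hg11.
  move=> p ip; rewrite dvdp_gcd => /andP [a c].
  have hpN : p %| N by apply: dvdp_trans hg11.
  by case: (HL _ ip hpN) => l1 _ _ _; move: l1; rewrite a c.
have [[s t] /= e1] := Bezout_eq1_coprimepP _ _ c1.
set det := g11 * f12 - g12 * f11.
have [[u v] /= euv] := Bezoutp g22 f22.
have c2 : coprimep (u * g22 + v * f22) det.
  rewrite (eqp_coprimepl _ euv) /coprimep size_poly_eq1; apply: (unitLP N0 SF).
    by apply: dvdp_trans (dvdp_gcdl _ _) _; apply: dvdp_trans (dvdp_gcdl _ _) hg22.
  move=> p ip; rewrite !dvdp_gcd => /andP [/andP [b d] hdet].
  have hpN : p %| N by apply: dvdp_trans hg22.
  case: (HL _ ip hpN) => _ l2 l3 l4.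
  have na : ~~ (p %| g11) by move: l2; rewrite d b andbT andbF => ->.
  have nc : ~~ (p %| f11) by move: l3; rewrite d b andbT andbF => ->.
  by move: l4; rewrite b d na nc hdet.
have [[x y] /= e2] := Bezout_eq1_coprimepP _ _ c2.
move=> U V.
pose w := s * g12 + t * f12.
pose W := V - U * w.
pose k := - y.
pose aC := U * s + W * f11 * k; pose bC := W * (x * u).
pose aD := U * t - W * g11 * k; pose bD := W * (x * v).
exists (aC * g11), (aC * g12 + bC * g22), (aD * f11), (aD * f12 + bD * f22); split.
- by exists aC, bC; split; apply: dvdz; ring.
- by exists aD, bD; split; apply: dvdz; ring.
- apply: dvdz.
  have -> : U - (aC * g11 + aD * f11) = U * (1 - (s * g11 + t * f11)) by rewrite /aC /aD; ring.
  by rewrite e1 subrr mulr0.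
apply: dvdz.
have -> : V - (aC * g12 + bC * g22 + (aD * f12 + bD * f22)) =
  W * (1 - (x * (u * g22 + v * f22) + y * det)) by rewrite /aC /aD /bC /bD /W /w /k /det; ring.
by rewrite e2 subrr mulr0.
Qed.

End P2L.


Arguments irr_dvd_mul {F p a b}.
Arguments irr_sq {F N} SF {p}.
Arguments LP {F N} N0 SF {M y}.
Arguments unitLP {F N} N0 SF {h}.
Arguments irr_ndvd1 {F p}.
Arguments irr_gt1 {F p}.
Arguments irr_coprime {F p a}.
Arguments irr_neq0 {F p}.
Arguments mgcd_eq1 {F x y}.
Arguments monicize_eqp {F}.
Arguments monicize_monic {F h}.
Arguments monicize_eq1 {F h}.

Lemma dvdp_mgcd (F : fieldType) (p x y : {poly F}) : (p %| mgcd x y) = (p %| x) && (p %| y).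
Proof. by rewrite /mgcd (eqp_dvdr _ (monicize_eqp _)) dvdp_gcd. Qed.

Lemma irr_not1 (F : fieldType) (p : {poly F}) : irreducible_poly p -> ~~ (p %= 1).
Proof.
move=> ip; apply/negP => /eqp_size; rewrite size_poly1 => h.
by move: (irr_gt1 ip); rewrite h.
Qed.

Arguments irr_not1 {F p}.
Arguments dvdp_mgcd {F}.

Section Cond.
Variable F : fieldType.
Variables (N g11 g12 g22 f11 f12 f22 : {poly F}).
Hypothesis N0 : N != 0.
Hypothesis Nmon : N \is monic.
Hypothesis SF : forall u v, u * v %| N -> coprimep u v.
Hypotheses (hg11 : g11 %| N) (hg22 : g22 %| N).
Hypotheses (hf11 : f11 %| N) (hf22 : f22 %| N).

Let nz [x : {poly F}] : x %| N -> x != 0.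
Proof. by move=> h; apply: contraNneq N0 => e; move: h; rewrite e dvd0p. Qed.

Lemma C1 : mgcd f11 g11 = 1 <->
  (forall p, irreducible_poly p -> p %| N -> ~~ ((p %| g11) && (p %| f11))).
Proof.
rewrite mgcd_eq1; split.
  move=> cop p ip hpN; apply/negP => /andP [a c].
  move/coprimepP: cop => /(_ p c a) h.
  by move: (irr_not1 ip); rewrite h.
move=> H; rewrite /coprimep size_poly_eq1; apply: (unitLP N0 SF).
  exact: dvdp_trans (dvdp_gcdl _ _) hf11.
move=> p ip; rewrite dvdp_gcd => /andP [c a].
have hpN : p %| N by apply: dvdp_trans hf11.
by move: (H p ip hpN); rewrite a c.
Qed.

Lemma C2 : mgcd g11 g22 = N %/ mlcm f11 f22 <->
  (forall p, irreducible_poly p -> p %| N ->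
     ((p %| g11) && (p %| g22)) = (~~ (p %| f11) && ~~ (p %| f22))).
Proof.
set G := gcdp f11 f22.
have f110 := nz hf11; have f220 := nz hf22.
have G0 : G != 0 by rewrite gcdp_eq0 negb_and f110.
set a := f11 %/ G; set b := f22 %/ G.
have ea : a * G = f11 by rewrite divpK // dvdp_gcdl.
have eb : b * G = f22 by rewrite divpK // dvdp_gcdr.
set Lr := f11 * f22 %/ G.
have eLr : Lr = a * b * G.
  by rewrite /Lr -{1}ea -{1}eb (_ : a * G * (b * G) = a * b * G * G) ?mulpK //; ring.
have cab : coprimep a b by apply: coprimep_div_gcd; rewrite f110.
have LrN : Lr %| N.
  set k := N %/ f22.
  have ek : k * f22 = N by rewrite divpK.
  have h1 : a * G %| (k * b) * G by rewrite ea -mulrA eb ek.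
  rewrite dvdp_mul2r // mulrC Gauss_dvdpr // in h1.
  have b0 : b != 0 by apply: contraNneq f220 => e; rewrite -eb e mul0r.
  by rewrite -ek -eb eLr mulrA !dvdp_mul2r.
have f11Lr : f11 %| Lr.
  by rewrite eLr -ea (_ : a * b * G = a * G * b); [exact: dvdp_mulIl | ring].
have f22Lr : f22 %| Lr by rewrite eLr -eb -mulrA dvdp_mulIr.
have Lrff : Lr %| f11 * f22.
  by rewrite -ea -eb eLr (_ : a * G * (b * G) = a * b * G * G); [exact: dvdp_mulIl | ring].
set L := mlcm f11 f22.
have pL : forall p, irreducible_poly p -> (p %| L) = (p %| f11) || (p %| f22).
  move=> p ip; rewrite /L /mlcm (eqp_dvdr _ (monicize_eqp _)) -/G -/Lr.
  apply/idP/idP.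
    by move=> h; case: (irr_dvd_mul ip (dvdp_trans h Lrff)) => ->; rewrite ?orbT.
  by case/orP => h; [exact: dvdp_trans h f11Lr | exact: dvdp_trans h f22Lr].
have LN : L %| N by rewrite /L /mlcm (eqp_dvdl _ (monicize_eqp _)) -/G -/Lr.
have Lmon : L \is monic by apply: monicize_monic; exact: nz LrN.
set Q := N %/ L.
have eQ : Q * L = N by rewrite divpK.
have Qmon : Q \is monic by rewrite -(monicMr Q Lmon) eQ.
have QN : Q %| N by rewrite -eQ dvdp_mulIl.
have pQ : forall p, irreducible_poly p -> p %| N -> (p %| Q) = ~~ (p %| L).
  move=> p ip hpN; apply/idP/idP.
    move=> hQ; apply/negP => hL.
    have : p * p %| N by rewrite -eQ dvdp_mul.
    by rewrite (negPf (irr_sq SF ip)).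
  move=> nL; have : p %| Q * L by rewrite eQ.
  by case/irr_dvd_mul => // h; rewrite h in nL.
have g0 : gcdp g11 g22 != 0 by rewrite gcdp_eq0 negb_and (nz hg11).
have gmon : mgcd g11 g22 \is monic by apply: monicize_monic.
have gN : mgcd g11 g22 %| N.
  by apply: dvdp_trans hg11; rewrite /mgcd (eqp_dvdl _ (monicize_eqp _)) dvdp_gcdl.
split.
  move=> e p ip hpN.
  by rewrite -dvdp_mgcd e pQ // pL // negb_or.
move=> H; apply/eqP; rewrite -(eqp_monic gmon Qmon) /eqp; apply/andP; split.
  apply: (LP N0 SF gN) => p ip hpg.
  have hpN : p %| N by apply: dvdp_trans gN.
  by rewrite pQ // pL // negb_or -H // -dvdp_mgcd.
apply: (LP N0 SF QN) => p ip hpQ.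
have hpN : p %| N by apply: dvdp_trans QN.
by rewrite dvdp_mgcd H // -negb_or -pL // -pQ.
Qed.

End Cond.

Section Cond4.
Variable F : fieldType.
Variables (N g11 g12 g22 f11 f12 f22 : {poly F}).
Hypothesis N0 : N != 0.
Hypothesis SF : forall u v, u * v %| N -> coprimep u v.
Hypotheses (hg11 : g11 %| N) (hg22 : g22 %| N).
Hypotheses (hf11 : f11 %| N) (hf22 : f22 %| N).

Lemma part22 [x11 x22 : {poly F}] : x11 %| N -> x22 %| N ->
  let gp := x22 %/ mgcd x11 x22 in
  [/\ gp %| x22,
      forall p, irreducible_poly p -> p %| gp -> ~~ (p %| x11) &
      forall p, irreducible_poly p -> p %| x22 -> ~~ (p %| x11) -> p %| gp].
Proof.
move=> h11 h22 gp.
have gd : mgcd x11 x22 %| x22.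
  by rewrite /mgcd (eqp_dvdl _ (monicize_eqp _)) dvdp_gcdr.
have e : gp * mgcd x11 x22 = x22 by rewrite divpK.
split.
- by rewrite -e dvdp_mulIl.
- move=> p ip hp; apply/negP => a.
  have b : p %| x22 by apply: dvdp_trans hp _; rewrite -e dvdp_mulIl.
  have : p * p %| N.
    by apply: dvdp_trans h22; rewrite -e dvdp_mul // dvdp_mgcd a b.
  by rewrite (negPf (irr_sq SF ip)).
move=> p ip b na.
have : p %| gp * mgcd x11 x22 by rewrite e.
by case/irr_dvd_mul => // h; move: h; rewrite dvdp_mgcd (negPf na).
Qed.

Lemma C4 :
  mgcd (mgcd (g22 %/ mgcd g11 g22) (f22 %/ mgcd f11 f22)) (g11 * f12 - g12 * f11) = 1 <->
  (forall p, irreducible_poly p -> p %| N ->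
     ((p %| g22) && (p %| f22) && ~~ (p %| g11) && ~~ (p %| f11)) ==>
        ~~ (p %| g11 * f12 - g12 * f11)).
Proof.
have [gd gna gin] := part22 hg11 hg22.
have [fd fna fin] := part22 hf11 hf22.
rewrite mgcd_eq1; split.
  move=> cop p ip hpN; apply/implyP => /andP [/andP [/andP [b d] na] nc].
  apply/negP => hdet.
  move/coprimepP: cop => /(_ p) h.
  have := h; rewrite dvdp_mgcd gin // fin // => /(_ isT hdet) h1.
  by move: (irr_not1 ip); rewrite h1.
move=> H; rewrite /coprimep size_poly_eq1; apply: (unitLP N0 SF).
  apply: dvdp_trans (dvdp_gcdl _ _) _.
  apply: dvdp_trans hg22; apply: dvdp_trans gd.
  by rewrite /mgcd (eqp_dvdl _ (monicize_eqp _)) dvdp_gcdl.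
move=> p ip; rewrite dvdp_gcd dvdp_mgcd => /andP [/andP [hg hf] hdet].
have b : p %| g22 by apply: dvdp_trans hg gd.
have d : p %| f22 by apply: dvdp_trans hf fd.
have hpN : p %| N by apply: dvdp_trans hg22.
have := H p ip hpN; rewrite b d (gna p ip hg) (fna p ip hf) hdet.
done.
Qed.
End Cond4.


Theorem theorem5p3 (F : finFieldType) (m : nat) (lam : F)
  (g11 g12 g22 f11 f12 f22 : {poly F}) :
  (0 < m)%N -> coprime m #|F| -> lam != 0 ->
  g11 %| xml m lam -> g22 %| xml m lam -> (size g12 < size g22)%N ->
  (g11 * g22) %| (xml m lam * g12) ->
  f11 %| xml m lam -> f22 %| xml m lam -> (size f12 < size f22)%N ->
  (f11 * f22) %| (xml m lam * f12) ->
  let g := mgcd g11 g22 in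
  let f := mgcd f11 f22 in
  let g22' := g22 %/ g in
  let f22' := f22 %/ f in
  LCP (qt_code m lam g11 g12 g22) (qt_code m lam f11 f12 f22) <->
  [/\ mgcd f11 g11 = 1,
      g = xml m lam %/ mlcm f11 f22,
      f = xml m lam %/ mlcm g11 g22 &
      mgcd (mgcd g22' f22') (g11 * f12 - g12 * f11) = 1].
Proof.
move=> m0 cop l0 hg11 hg22 _ hgc hf11 hf22 _ hfc g f g22' f22'.
have N0 : xml m lam != 0 by rewrite -size_poly_gt0 /xml size_XnsubC.
have Nmon : xml m lam \is monic by rewrite /xml monicXnsubC.
have SF : forall u v, u * v %| xml m lam -> coprimep u v.
  move=> u v; apply: separable_coprime; apply: xml_sep => //.
  exact: m_neq0.
rewrite (LCP_iff _ _ _ m0).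
have E1 : P1 _ m lam g11 g12 g22 f11 f12 f22 /\ P2 _ m lam g11 g12 g22 f11 f12 f22 <->
  (forall p, irreducible_poly p -> p %| xml m lam -> Loc g11 g12 g22 f11 f12 f22 p).
  split.
    by move=> [H1 H2]; apply: (Loc_of_P _ _ _ _ _ _ _ _ N0 SF hgc hfc H1 H2).
  move=> HL; split.
    exact: (P1_of_Loc _ _ _ _ _ _ _ _ N0 SF hgc hfc HL).
  exact: (P2_of_Loc _ _ _ _ _ _ _ _ N0 SF hg11 hg22 HL).
rewrite E1.
have c1 := C1 _ _ g11 f11 N0 SF hf11.
have c2 := C2 _ _ g11 g22 f11 f22 N0 Nmon SF hg11 hf11 hf22.
have c3 := C2 _ _ f11 f22 g11 g22 N0 Nmon SF hf11 hg11 hg22.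
have c4 := C4 _ _ g11 g12 g22 f11 f12 f22 N0 SF hg11 hg22 hf11 hf22.
split.
  move=> HL; split.
  - by apply: (proj2 c1) => p ip hpN; case: (HL p ip hpN).
  - by apply: (proj2 c2) => p ip hpN; case: (HL p ip hpN).
  - by apply: (proj2 c3) => p ip hpN; case: (HL p ip hpN).
  - by apply: (proj2 c4) => p ip hpN; case: (HL p ip hpN).
move=> [H1 H2 H3 H4] p ip hpN; split.
- exact: (proj1 c1 H1 p ip hpN).
- exact: (proj1 c2 H2 p ip hpN).
- exact: (proj1 c3 H3 p ip hpN).
- exact: (proj1 c4 H4 p ip hpN).
Qed.
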